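(* A convex body $K\subset\mathbb{C}^n$ is symmetric if and only if some translated copy $K'$ of $K$ has the property that for every complex $1$-dimensional linear subspace $L\subset\mathbb{C}^n$, the orthogonal projection of $K'$ onto $L$ is a closed disk in $L$ centered at the origin.
   Context: A convex body is a compact convex subset of $\mathbb{C}^n$ with nonempty interior. $\mathbb{S}^1=\{\xi\in\mathbb{C}:|\xi|=1\}$. A set $A\subset\mathbb{C}^n$ is called symmetric if there is a translated copy $A'=A-x_0$ of $A$ such that $\xi A'=A'$ for every $\xi\in\mathbb{S}^1$; $x_0$ is then called the center of symmetry. Orthogonal projections are with respect to the standard Hermitian inner product on $\mathbb{C}^n$; a disk in a complex line is a closed Euclidean round disk in it. *)

(* Defs.v *)
(* C^n is modelled as pairs (x, y) of real row vectors, z = x + i y. *)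
From HB Require Import structures.
From mathcomp Require Import all_boot all_order all_algebra.
From mathcomp Require Import all_classical all_reals all_analysis.
Set Implicit Arguments. Unset Strict Implicit. Unset Printing Implicit Defensive.
Import Order.TTheory GRing.Theory Num.Theory numFieldNormedType.Exports.
Local Open Scope classical_set_scope.
Local Open Scope ring_scope.

(* C^n, with the product (= Euclidean) topology of R^n x R^n = R^(2n). *)
Notation Cn R n := ('rV[R]_n * 'rV[R]_n)%type.

(* complex scalars xi = a + i b are pairs (a, b) *)
Notation Cx R := (R * R)%type.

Definition cadd (R : realType) n (z w : Cn R n) : Cn R n := (z.1 + w.1, z.2 + w.2).
Definition csub (R : realType) n (z w : Cn R n) : Cn R n := (z.1 - w.1, z.2 - w.2).
Definition czero (R : realType) n : Cn R n := (0, 0).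

Definition rscale (R : realType) n (t : R) (z : Cn R n) : Cn R n := (t *: z.1, t *: z.2).

(* complex scalar multiplication (a + i b)(x + i y) = (a x - b y) + i (a y + b x) *)
Definition cscale (R : realType) n (xi : Cx R) (z : Cn R n) : Cn R n :=
  (xi.1 *: z.1 - xi.2 *: z.2, xi.1 *: z.2 + xi.2 *: z.1).

(* standard Hermitian inner product <z, w> = sum_k z_k * conj(w_k) *)
Definition hdot (R : realType) n (z w : Cn R n) : Cx R :=
  (\sum_(k < n) (z.1 0 k * w.1 0 k + z.2 0 k * w.2 0 k),
   \sum_(k < n) (z.2 0 k * w.1 0 k - z.1 0 k * w.2 0 k)).

Definition enorm2 (R : realType) n (z : Cn R n) : R := (hdot z z).1.

Definition S1 (R : realType) : set (Cx R) := [set xi | xi.1 ^+ 2 + xi.2 ^+ 2 = 1].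

Definition translate (R : realType) n (A : set (Cn R n)) (x0 : Cn R n) : set (Cn R n) :=
  (fun a => csub a x0) @` A.

Definition rconvex (R : realType) n (K : set (Cn R n)) : Prop :=
  forall x y, K x -> K y -> forall t : R, 0 <= t <= 1 ->
    K (cadd (rscale t x) (rscale (1 - t) y)).

Definition convex_body (R : realType) n (K : set (Cn R n)) : Prop :=
  compact K /\ rconvex K /\ (K°) !=set0.

Definition is_symmetric (R : realType) n (A : set (Cn R n)) : Prop :=
  exists x0 : Cn R n, forall xi, S1 xi ->
    cscale xi @` translate A x0 = translate A x0.

Definition cline (R : realType) n (v : Cn R n) : set (Cn R n) :=
  [set cscale xi v | xi in [set: Cx R]].

Definition oproj (R : realType) n (v : Cn R n) (z : Cn R n) : Cn R n :=
  cscale ((hdot z v).1 / enorm2 v, (hdot z v).2 / enorm2 v) v.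

Definition centered_disk_in (R : realType) n (L D : set (Cn R n)) : Prop :=
  exists r : R, 0 < r /\ D = [set w | L w /\ enorm2 w <= r ^+ 2].

(* Main.v *)
From Pilot Require Import Defs.
From HB Require Import structures.
From mathcomp Require Import all_boot all_order all_algebra.
From mathcomp Require Import all_classical all_reals all_analysis.
From mathcomp Require Import ring lra.
Import Pilot.Defs.
Import Order.TTheory GRing.Theory Num.Theory numFieldNormedType.Exports.
Local Open Scope classical_set_scope.
Local Open Scope ring_scope.
Section S.
Variable R : realType.
Variable n : nat.
Implicit Types z w u v : Cn R n.
Implicit Types c : Cx R.

Lemma cscaleE1 c v k : (cscale c v).1 0 k = c.1 * v.1 0 k - c.2 * v.2 0 k.
Proof. by rewrite /cscale /= !mxE. Qed.
Lemma cscaleE2 c v k : (cscale c v).2 0 k = c.1 * v.2 0 k + c.2 * v.1 0 k.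
Proof. by rewrite /cscale /= !mxE. Qed.

Lemma hdot_cscale1 c v w :
  (hdot (cscale c v) w).1 = c.1 * (hdot v w).1 - c.2 * (hdot v w).2.
Proof.
rewrite /hdot /= !mulr_sumr -sumrB; apply: eq_bigr => k _.
rewrite cscaleE1 cscaleE2; ring.
Qed.
Lemma hdot_cscale2 c v w :
  (hdot (cscale c v) w).2 = c.1 * (hdot v w).2 + c.2 * (hdot v w).1.
Proof.
rewrite /hdot /= !mulr_sumr -big_split; apply: eq_bigr => k _ /=.
rewrite cscaleE1 cscaleE2; ring.
Qed.
Lemma hdot_vv2 v : (hdot v v).2 = 0.
Proof. rewrite /hdot /= big1 // => k _; ring. Qed.
Lemma enorm2E v : enorm2 v = \sum_(k < n) (v.1 0 k ^+ 2 + v.2 0 k ^+ 2).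
Proof. by rewrite /enorm2 /hdot /=; apply: eq_bigr => k _; rewrite !expr2. Qed.
Lemma enorm2_ge0 v : 0 <= enorm2 v.
Proof. rewrite enorm2E; apply: sumr_ge0 => k _; apply: addr_ge0; exact: sqr_ge0. Qed.
Lemma enorm2_cscale c v : enorm2 (cscale c v) = (c.1 ^+ 2 + c.2 ^+ 2) * enorm2 v.
Proof.
rewrite !enorm2E mulr_sumr; apply: eq_bigr => k _.
rewrite cscaleE1 cscaleE2; ring.
Qed.
Lemma enorm2_gt0 v : v <> (0, 0) -> 0 < enorm2 v.
Proof.
move=> v0; rewrite lt_def enorm2_ge0 andbT; apply/eqP => /eqP.
rewrite enorm2E psumr_eq0; last by move=> k _; apply: addr_ge0; exact: sqr_ge0.
move=> /allP H; apply: v0.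
have H' k : v.1 0 k = 0 /\ v.2 0 k = 0.
  have /implyP := H k (mem_index_enum _) => /(_ isT) /eqP.
  move/eqP; rewrite paddr_eq0 ?sqr_ge0 // !sqrf_eq0 => /andP[/eqP -> /eqP ->] //.
case: v H H' => a b /= _ H'; congr pair; apply/rowP => k; rewrite mxE;
  by case: (H' k).
Qed.
Lemma hdot_cadd1 z w u : (hdot (cadd z w) u).1 = (hdot z u).1 + (hdot w u).1.
Proof. rewrite /hdot /= -big_split; apply: eq_bigr => k _ /=; rewrite !mxE; ring. Qed.
Lemma hdot_cadd2 z w u : (hdot (cadd z w) u).2 = (hdot z u).2 + (hdot w u).2.
Proof. rewrite /hdot /= -big_split; apply: eq_bigr => k _ /=; rewrite !mxE; ring. Qed.
Lemma hdot_csub1 z w u : (hdot (csub z w) u).1 = (hdot z u).1 - (hdot w u).1.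
Proof. rewrite /hdot /= -sumrB; apply: eq_bigr => k _ /=; rewrite !mxE; ring. Qed.
Lemma hdot_rscale1 t z u : (hdot (rscale t z) u).1 = t * (hdot z u).1.
Proof. rewrite /hdot /= mulr_sumr; apply: eq_bigr => k _ /=; rewrite !mxE; ring. Qed.
Lemma hdot_rscale2 t z u : (hdot (rscale t z) u).2 = t * (hdot z u).2.
Proof. rewrite /hdot /= mulr_sumr; apply: eq_bigr => k _ /=; rewrite !mxE; ring. Qed.
Lemma cD (T:topologicalType) (f g : T -> R) x : {for x, continuous f} -> {for x, continuous g} -> {for x, continuous (fun t => f t + g t)}.
Proof. exact: cvgD. Qed.
Lemma cB (T:topologicalType) (f g : T -> R) x : {for x, continuous f} -> {for x, continuous g} -> {for x, continuous (fun t => f t - g t)}.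
Proof. exact: cvgB. Qed.
Lemma cM (T:topologicalType) (f g : T -> R) x : {for x, continuous f} -> {for x, continuous g} -> {for x, continuous (fun t => f t * g t)}.
Proof. exact: cvgM. Qed.
Lemma cC (T:topologicalType) (a : R) x : {for x, continuous (fun _ : T => a)}.
Proof. exact: cst_continuous. Qed.
Lemma cont_c1 k : continuous (fun z : Cn R n => z.1 0 k).
Proof.
move=> z; apply: (@continuous_comp _ _ _ fst (fun M : 'rV[R]_n => M 0 k)).
  exact: cvg_fst.
exact: coord_continuous.
Qed.
Lemma cont_c2 k : continuous (fun z : Cn R n => z.2 0 k).
Proof.
move=> z; apply: (@continuous_comp _ _ _ snd (fun M : 'rV[R]_n => M 0 k)).
  exact: cvg_snd.
exact: coord_continuous.
Qed.
Lemma cont_sum (T : topologicalType) (F : 'I_n -> T -> R) :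
  (forall k, continuous (F k)) -> continuous (fun x => \sum_(k < n) F k x).
Proof. move=> H; apply: continuous_big => //. exact: add_continuous. Qed.
Lemma cont_hdot1 w : continuous (fun z => (hdot z w).1).
Proof.
apply: cont_sum => k x; apply: (@cD _ (fun z : Cn R n => z.1 0 k * w.1 0 k) (fun z => z.2 0 k * w.2 0 k)).
  by apply: cM; [exact: cont_c1| exact: cC].
by apply: cM; [exact: cont_c2| exact: cC].
Qed.
Lemma cont_hdot2 w : continuous (fun z => (hdot z w).2).
Proof.
apply: cont_sum => k x; apply: (@cB _ (fun z : Cn R n => z.2 0 k * w.1 0 k) (fun z => z.1 0 k * w.2 0 k)).
  by apply: cM; [exact: cont_c2| exact: cC].
by apply: cM; [exact: cont_c1| exact: cC].
Qed.
Lemma cont_enorm2_sub y : continuous (fun z => enorm2 (csub y z)).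
Proof.
have -> : (fun z => enorm2 (csub y z)) = (fun z => \sum_(k < n)
   ((y.1 0 k - z.1 0 k) * (y.1 0 k - z.1 0 k) + (y.2 0 k - z.2 0 k) * (y.2 0 k - z.2 0 k))).
  by apply: funext => z; rewrite /enorm2 /hdot /=; apply: eq_bigr => k _; rewrite !mxE.
apply: cont_sum => k x.
have c1 : {for x, continuous (fun z : Cn R n => y.1 0 k - z.1 0 k)}.
  by apply: cB; [exact: cst_continuous| exact: cont_c1].
have c2 : {for x, continuous (fun z : Cn R n => y.2 0 k - z.2 0 k)}.
  by apply: cB; [exact: cst_continuous| exact: cont_c2].
by apply: (@cD _ (fun z : Cn R n => (y.1 0 k - z.1 0 k) * (y.1 0 k - z.1 0 k)) (fun z => (y.2 0 k - z.2 0 k) * (y.2 0 k - z.2 0 k))); apply: cM.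
Qed.
Lemma cont_oproj_norm v : continuous (fun z => enorm2 (oproj v z)).
Proof.
have -> : (fun z => enorm2 (oproj v z)) = (fun z =>
   ((hdot z v).1 / enorm2 v * ((hdot z v).1 / enorm2 v) +
    (hdot z v).2 / enorm2 v * ((hdot z v).2 / enorm2 v)) * enorm2 v).
  by apply: funext => z; rewrite /oproj enorm2_cscale /= !expr2.
move=> x; apply: (@cM _ (fun z => (hdot z v).1 / enorm2 v * ((hdot z v).1 / enorm2 v) +
    (hdot z v).2 / enorm2 v * ((hdot z v).2 / enorm2 v)) (fun=> enorm2 v)); last exact: cC.
have c1 : {for x, continuous (fun z => (hdot z v).1 / enorm2 v)}.
  apply: (@cM _ (fun z => (hdot z v).1) (fun=> (enorm2 v)^-1)); last exact: cC.
  exact: cont_hdot1.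
have c2 : {for x, continuous (fun z => (hdot z v).2 / enorm2 v)}.
  apply: (@cM _ (fun z => (hdot z v).2) (fun=> (enorm2 v)^-1)); last exact: cC.
  exact: cont_hdot2.
apply: (@cD _ (fun z => (hdot z v).1 / enorm2 v * ((hdot z v).1 / enorm2 v)) (fun z => (hdot z v).2 / enorm2 v * ((hdot z v).2 / enorm2 v))); exact: cM.
Qed.
Lemma cont_csub x0 : continuous (fun a : Cn R n => csub a x0).
Proof.
move=> z; have -> : (fun a : Cn R n => csub a x0) = (fun a => a - x0) by []. by apply: cvgB; [exact: cvg_id | exact: cvg_cst].
Qed.
Lemma compact_translate (K : set (Cn R n)) (x0 : Cn R n) : compact K -> compact (translate K x0).
Proof.
move=> cK; apply: continuous_compact => //.
by apply: continuous_subspaceT; exact: cont_csub.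
Qed.
Lemma pairE (a b : Cn R n) : a.1 = b.1 -> a.2 = b.2 -> a = b.
Proof. by case: a b => ? ? [? ?] /= -> ->. Qed.

Lemma rconvex_translate (K : set (Cn R n)) x0 : rconvex K -> rconvex (translate K x0).
Proof.
move=> cK _ _ [a Ka <-] [b Kb <-] t t01.
exists (cadd (rscale t a) (rscale (1 - t) b)); first exact: cK.
apply: pairE; apply/rowP => k; rewrite !mxE; ring.
Qed.

Lemma enorm2_expand y p z t :
  enorm2 (csub y (cadd (rscale t z) (rscale (1 - t) p))) =
  enorm2 (csub y p) - 2 * t * (hdot (csub z p) (csub y p)).1
    + t ^+ 2 * enorm2 (csub z p).
Proof.
rewrite !enorm2E /hdot /= mulr_sumr -sumrB mulr_sumr -big_split /=.
apply: eq_bigr => k _; rewrite !mxE; ring.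
Qed.

Lemma key (K' : set (Cn R n)) : compact K' -> rconvex K' ->
  (forall v, v <> (0, 0) -> centered_disk_in (cline v) (oproj v @` K')) ->
  forall xi, S1 xi -> forall x, K' x -> K' (cscale xi x).
Proof.
move=> cK cvK H xi Sxi x Kx.
apply: contrapT => Ny.
set y := cscale xi x.
have [p pK pmin] := @compact_EVT_min _ R (fun z => enorm2 (csub y z)) K'
  (ex_intro _ x Kx) cK (continuous_subspaceT (cont_enorm2_sub y)).
rewrite inE in pK.
set u := csub y p.
have u0 : u <> (0, 0).
  move=> u0; apply: Ny; suff yp : y = p by move: pK; rewrite -yp.
  apply: pairE; apply/rowP => k; have := congr1 (fun w => w.1 0 k) u0;
    have := congr1 (fun w => w.2 0 k) u0; rewrite /u /= !mxE => h1 h2.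
    by apply/eqP; rewrite -subr_eq0 h2.
  by apply/eqP; rewrite -subr_eq0 h1.
have e0 : 0 < enorm2 u by exact: enorm2_gt0.
have var : forall z, K' z -> (hdot z u).1 <= (hdot p u).1.
  move=> z Kz.
  have ineq : forall t, 0 < t <= 1 ->
      2 * (hdot (csub z p) u).1 <= t * enorm2 (csub z p).
    move=> t /andP[t0 t1].
    have Kq : K' (cadd (rscale t z) (rscale (1 - t) p)).
      by apply: cvK => //; rewrite (ltW t0) t1.
    have := pmin _ (mem_set Kq); rewrite enorm2_expand -/u => h.
    have h' : t * (2 * (hdot (csub z p) u).1) <= t * (t * enorm2 (csub z p)).
      move: h; set X := (hdot _ _).1; set E := enorm2 (csub z p); set U := enorm2 u; move=> h. nra.
    by rewrite ler_pM2l in h'.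
  have E0 := enorm2_ge0 (csub z p).
  rewrite -subr_le0 -hdot_csub1.
  set r := (hdot (csub z p) u).1 in ineq *.
  set E := enorm2 (csub z p) in ineq E0 *.
  rewrite leNgt; apply/negP => r0.
  have hE : 0 < E + r by lra.
  have := ineq (r / (E + r)).
  rewrite divr_gt0 // ler_pdivrMr // mul1r.
  have -> : r <= E + r by lra.
  move=> /(_ isT).
  rewrite mulrAC ler_pdivlMr //.
  nra.
have [r [r0 HD]] := H u u0.
set a := hdot x u; set e := enorm2 u.
have inD : (oproj u @` K') (oproj u x) by exists x.
rewrite HD in inD; case: inD => _ nx0.
have nx : ((a.1/e)^+2 + (a.2/e)^+2) * e <= r^+2.
  by move: nx0; rewrite /oproj enorm2_cscale.
pose c : Cx R := (xi.1 * (a.1/e) - xi.2 * (a.2/e), xi.1 * (a.2/e) + xi.2 * (a.1/e)).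
have inD2 : (oproj u @` K') (cscale c u).
  rewrite HD; split; first by exists c.
  rewrite enorm2_cscale /= -/e.
  have -> : (xi.1 * (a.1 / e) - xi.2 * (a.2 / e)) ^+ 2 +
     (xi.1 * (a.2 / e) + xi.2 * (a.1 / e)) ^+ 2 =
     (xi.1 ^+ 2 + xi.2 ^+ 2) * ((a.1 / e) ^+ 2 + (a.2 / e) ^+ 2) by ring.
  by rewrite Sxi mul1r.
case: inD2 => zs Kzs Ezs.
set b := hdot zs u.
have hb : b.1 / e * e = c.1 * e.
  have := congr1 (fun w => (hdot w u).1) Ezs.
  by rewrite /oproj !hdot_cscale1 hdot_vv2 !mulr0 !subr0.
have hb' : b.1 = xi.1 * a.1 - xi.2 * a.2.
  have ne : e != 0 by rewrite gt_eqF.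
  move: hb; rewrite (divfK ne) /= => ->; field; exact: ne.
have hy : (hdot y u).1 = xi.1 * a.1 - xi.2 * a.2 by rewrite hdot_cscale1.
have := var _ Kzs.
have : (hdot y u).1 - (hdot p u).1 = e by rewrite -hdot_csub1.
lra.
Qed.
Lemma disk (K' : set (Cn R n)) : compact K' -> rconvex K' ->
  (forall xi, S1 xi -> forall x, K' x -> K' (cscale xi x)) ->
  forall v, v <> (0, 0) ->
  (exists z, K' z /\ ((hdot z v).1 != 0 \/ (hdot z v).2 != 0)) ->
  centered_disk_in (cline v) (oproj v @` K').
Proof.
move=> cK cvK inv v v0 [z1 [Kz1 nz1]].
have [m mK mmax] := @compact_EVT_max _ R (fun z => enorm2 (oproj v z)) K'
  (ex_intro _ z1 Kz1) cK (continuous_subspaceT (cont_oproj_norm v)).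
rewrite inE in mK.
have e0 : 0 < enorm2 v by exact: enorm2_gt0.
set e := enorm2 v in e0.
have ne : e != 0 by rewrite gt_eqF.
set a := hdot m v.
pose q1 := a.1 / e. pose q2 := a.2 / e.
have ME : enorm2 (oproj v m) = (q1 ^+ 2 + q2 ^+ 2) * e.
  by rewrite /oproj enorm2_cscale.
have rho0 : 0 < q1 ^+ 2 + q2 ^+ 2.
  have h1 := mmax _ (mem_set Kz1).
  rewrite ME /oproj enorm2_cscale /= -/e in h1.
  set b1 := (hdot z1 v).1 in nz1 h1; set b2 := (hdot z1 v).2 in nz1 h1.
  have hb : 0 < (b1 / e) ^+ 2 + (b2 / e) ^+ 2.
    case: nz1 => nb.
      apply: ltr_wpDr; first exact: sqr_ge0.
      by rewrite exprn_even_gt0 //= mulf_neq0 // invr_eq0.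
    apply: ltr_wpDl; first exact: sqr_ge0.
    by rewrite exprn_even_gt0 //= mulf_neq0 // invr_eq0.
  rewrite ler_pM2r // in h1.
  exact: lt_le_trans h1.
set rho := q1 ^+ 2 + q2 ^+ 2 in rho0 ME.
have nrho : rho != 0 by rewrite gt_eqF.
exists (Num.sqrt (rho * e)); split; first by rewrite sqrtr_gt0 mulr_gt0.
rewrite sqr_sqrtr; last by rewrite mulr_ge0 // ltW.
apply/seteqP; split.
  move=> w [z Kz <-]; split.
    by exists ((hdot z v).1 / enorm2 v, (hdot z v).2 / enorm2 v).
  by rewrite -ME; exact: mmax (mem_set Kz).
move=> w [[c _ <-] hc].
rewrite enorm2_cscale ler_pM2r // in hc.
pose al1 := (c.1 * q1 + c.2 * q2) / rho.
pose al2 := (c.2 * q1 - c.1 * q2) / rho.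
have hal : al1 ^+ 2 + al2 ^+ 2 <= 1.
  have -> : al1 ^+ 2 + al2 ^+ 2 = (c.1 ^+ 2 + c.2 ^+ 2) / rho.
    by rewrite /al1 /al2 /rho; field; rewrite -/rho.
  by rewrite ler_pdivrMr // mul1r.
have s2 : 0 <= 1 - al1 ^+ 2.
  by rewrite subr_ge0; apply: le_trans hal; rewrite lerDl sqr_ge0.
pose s := Num.sqrt (1 - al1 ^+ 2).
have ss : s ^+ 2 = 1 - al1 ^+ 2 by rewrite sqr_sqrtr.
have s0 : 0 <= s by exact: sqrtr_ge0.
have [l [l0 l1 hl]] : exists l : R, [/\ 0 <= l, l <= 1 & al2 = l * s - (1 - l) * s].
  have a2s : al2 ^+ 2 <= s ^+ 2 by rewrite ss; lra.
  have [sz|sp] := eqVneq s 0.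
    exists 1; split => //; rewrite sz in a2s *.
    rewrite expr0n /= in a2s; rewrite !mulr0 subr0; nra.
  have sp' : 0 < s by rewrite lt_def sp s0.
  have b1 : -s <= al2 by nra.
  have b2 : al2 <= s by nra.
  have t1 : -1 <= al2 / s by rewrite ler_pdivlMr // mulN1r.
  have t2 : al2 / s <= 1 by rewrite ler_pdivrMr // mul1r.
  exists ((1 + al2 / s) / 2); split.
  - lra.
  - lra.
  - field; exact: sp.
pose xi : Cx R := (al1, s). pose xi' : Cx R := (al1, - s).
have S1xi : S1 xi by rewrite /S1 /= ss addrC subrK.
have S1xi' : S1 xi' by rewrite /S1 /= sqrrN ss addrC subrK.
pose z := cadd (rscale l (cscale xi m)) (rscale (1 - l) (cscale xi' m)).
have Kz : K' z by apply: cvK; [exact: inv | exact: inv | rewrite l0 l1].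
exists z => //; rewrite /oproj; congr (cscale _ v).
have -> : c = (c.1, c.2) by case: c {hc al1 al2 hal s2 s ss s0 hl xi xi' S1xi S1xi' z Kz}.
congr pair.
  rewrite hdot_cadd1 !hdot_rscale1 !hdot_cscale1 -/a -/e.
  have -> : l * (xi.1 * a.1 - xi.2 * a.2) + (1 - l) * (xi'.1 * a.1 - xi'.2 * a.2)
     = al1 * a.1 - al2 * a.2 by rewrite hl /=; ring.
  rewrite /al1 /al2 /rho /q1 /q2; field.
  apply/andP; split; first exact: ne.
  have -> : a.1 ^+ 2 + a.2 ^+ 2 = rho * e ^+ 2 by rewrite /rho /q1 /q2; field.
  by rewrite mulf_neq0 // expf_neq0.
rewrite hdot_cadd2 !hdot_rscale2 !hdot_cscale2 -/a -/e.
have -> : l * (xi.1 * a.2 + xi.2 * a.1) + (1 - l) * (xi'.1 * a.2 + xi'.2 * a.1)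
   = al1 * a.2 + al2 * a.1 by rewrite hl /=; ring.
rewrite /al1 /al2 /rho /q1 /q2; field.
apply/andP; split; first exact: ne.
have -> : a.1 ^+ 2 + a.2 ^+ 2 = rho * e ^+ 2 by rewrite /rho /q1 /q2; field.
by rewrite mulf_neq0 // expf_neq0.
Qed.
Lemma phic (k0 v : Cn R n) : continuous (fun t : R => k0 + t *: v).
Proof.
move=> t. apply: cvgD; first exact: cvg_cst.
apply: cvgZr_tmp. exact: cvg_id.
Qed.
Lemma foo (k0 v : Cn R n) (K : set (Cn R n)) : nbhs k0 K -> exists t : R, 0 < t /\ K (k0 + t *: v).
Proof.
move=> hK.
have : nbhs (0:R) ((fun t : R => k0 + t *: v) @^-1` K).
  apply: phic; by rewrite scale0r addr0.
move=> /nbhs_ballP [e e0 he].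
exists (e / 2); split; first by rewrite divr_gt0.
have e0' : 0 < e := e0. apply: he; rewrite /ball /= sub0r normrN gtr0_norm; lra.
Qed.
Lemma cscale_inv (xi : Cx R) (y : Cn R n) : S1 xi ->
  cscale xi (cscale (xi.1, - xi.2) y) = y.
Proof.
rewrite /S1 /= => h; apply: pairE; apply/rowP => k; rewrite !mxE /=.
  by transitivity ((xi.1 ^+ 2 + xi.2 ^+ 2) * y.1 0 k); [ring | rewrite h mul1r].
by transitivity ((xi.1 ^+ 2 + xi.2 ^+ 2) * y.2 0 k); [ring | rewrite h mul1r].
Qed.
End S.

Theorem lemma2p5 (R : realType) (n : nat) (K : set (Cn R n)) :
  convex_body K ->
  (is_symmetric K <->
   exists x0 : Cn R n, forall v : Cn R n, v <> (0, 0) ->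
     centered_disk_in (cline v) (oproj v @` translate K x0)).
Proof.
move=> [cK [cvK [k0 k0i]]]; split.
  move=> [x0 Hsym]; exists x0 => v v0.
  apply: disk => //.
  - exact: compact_translate.
  - exact: rconvex_translate.
  - by move=> xi Sxi x Kx; rewrite -(Hsym xi Sxi); exists x.
  have [t [t0 Kt]] := @foo R n k0 v K k0i.
  have Kk0 : K k0 := nbhs_singleton k0i.
  have e0 := @enorm2_gt0 R n v v0.
  have [h|h] := eqVneq (hdot (csub k0 x0) v).1 0.
    exists (csub (k0 + t *: v) x0); split; first by exists (k0 + t *: v).
    left.
    have -> : csub (k0 + t *: v) x0 = cadd (csub k0 x0) (rscale t v).
      by apply: pairE; apply/rowP => k; rewrite !mxE /=; ring.
    rewrite hdot_cadd1 hdot_rscale1 h add0r mulf_neq0 // ?gt_eqF //.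
  by exists (csub k0 x0); split; [exists k0 | left].
move=> [x0 H]; exists x0 => xi Sxi.
have cK' := @compact_translate R n K x0 cK.
have cvK' := @rconvex_translate R n K x0 cvK.
apply/seteqP; split.
  by move=> _ [y Ky <-]; exact: key.
move=> y Ky; exists (cscale (xi.1, - xi.2) y); last exact: cscale_inv.
apply: key => //; rewrite /S1 /= sqrrN; exact: Sxi.
Qed.
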